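(* Let $0<a<1$ and let $\tau_1,\tau_2:[0,a]\to[0,1]$ be continuously differentiable, strictly increasing maps with $\tau_i(0)=0$, $\tau_i(a)=1$, $\tau_1(x)\le x/a$ and $\tau_2(x)\ge x/a$, such that $\tau_{21}=\tau_2^{-1}\circ\tau_1:[0,a]\to[0,a]$ is continuously differentiable and satisfies $\tau_{21}(x)<x$ for $x\in(0,a)$. Let $0<\widehat a<a$ and $\sigma<1$ be such that $\tau_{21}'(x)\le\sigma$ for $x\in[0,\widehat a]$. Then the functional equation $$p(x)=p(\tau_{21}(x))\,\tau_{21}'(x)-\left[\tau_{21}'(x)-a\,\tau_1'(x)\right],\qquad x\in[0,\widehat a],$$ has exactly one solution $p\in L^\infty[0,\widehat a]$ (bounded functions on $[0,\widehat a]$). *)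

(* Defs.v *)
From Stdlib Require Export Reals Lra.
Open Scope R_scope.

Definition Icc (a b x : R) : Prop := a <= x <= b.

Definition continuous_within (D : R -> Prop) (f : R -> R) (x : R) : Prop :=
  forall eps, 0 < eps -> exists delta, 0 < delta /\
    forall y, D y -> Rabs (y - x) < delta -> Rabs (f y - f x) < eps.

(* l is the derivative of f at x relative to the set D
   (one-sided at the endpoints of an interval). *)
Definition has_derivative_within (D : R -> Prop) (f : R -> R) (x l : R) : Prop :=
  forall eps, 0 < eps -> exists delta, 0 < delta /\
    forall y, D y -> y <> x -> Rabs (y - x) < delta ->
      Rabs ((f y - f x) / (y - x) - l) < eps.

Definition C1_on (a b : R) (f f' : R -> R) : Prop :=
  (forall x, Icc a b x -> has_derivative_within (Icc a b) f x (f' x)) /\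
  (forall x, Icc a b x -> continuous_within (Icc a b) f' x).

Definition strict_incr_on (a b : R) (f : R -> R) : Prop :=
  forall x y, Icc a b x -> Icc a b y -> x < y -> f x < f y.

Definition bounded_on (a b : R) (f : R -> R) : Prop :=
  exists M, forall x, Icc a b x -> Rabs (f x) <= M.

(* Main.v *)
Require Import Defs.
From Stdlib Require Import Reals Lra.
From Coquelicot Require Import Coquelicot.
Open Scope R_scope.

Definition clamp (lo hi c : R) := Rmax lo (Rmin hi c).

Lemma clamp_in lo hi c : lo <= hi -> Icc lo hi (clamp lo hi c).
Proof. intros. unfold clamp, Icc, Rmax, Rmin. repeat destruct Rle_dec; lra. Qed.

Lemma clamp_lip lo hi c y : Icc lo hi c -> Rabs (clamp lo hi y - c) <= Rabs (y - c).
Proof. unfold Icc, clamp, Rmax, Rmin; intros. repeat destruct Rle_dec;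
  unfold Rabs; repeat destruct Rcase_abs; lra. Qed.

Lemma bounded_cont lo hi f : lo <= hi ->
  (forall x, Icc lo hi x -> continuous_within (Icc lo hi) f x) ->
  exists M, forall x, Icc lo hi x -> Rabs (f x) <= M.
Proof.
  intros Hle Hc.
  set (F := fun c => Rabs (f (clamp lo hi c))).
  assert (HF : forall c, lo <= c <= hi -> continuity_pt F c).
  { intros c Hcc eps Heps.
    destruct (Hc c Hcc eps Heps) as [dl [Hdl Hd]].
    exists dl; split; [lra|].
    intros y [_ Hy]. simpl in *. unfold R_dist in *. unfold F.
    assert (Ec : clamp lo hi c = c) by (unfold clamp, Rmax, Rmin; repeat destruct Rle_dec; lra).
    rewrite Ec.
    eapply Rle_lt_trans; [apply Rabs_triang_inv2|].
    apply Hd. apply clamp_in; lra.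
    eapply Rle_lt_trans; [apply clamp_lip; exact Hcc| exact Hy]. }
  destruct (continuity_ab_maj F lo hi Hle HF) as [Mx [HM _]].
  exists (F Mx). intros x Hx.
  assert (Ec : clamp lo hi x = x) by (unfold Icc in Hx; unfold clamp, Rmax, Rmin; repeat destruct Rle_dec; lra).
  specialize (HM x Hx). unfold F in HM. rewrite Ec in HM. exact HM.
Qed.

Lemma deriv_nonneg lo hi f df x : lo < hi -> Icc lo hi x ->
  has_derivative_within (Icc lo hi) f x (df x) ->
  (forall u v, Icc lo hi u -> Icc lo hi v -> u < v -> f u < f v) -> 0 <= df x.
Proof.
  intros Hlt Hx Hd Hinc.
  destruct (Rle_dec 0 (df x)) as [h|h]; [exact h|].
  exfalso. destruct (Hd (- df x)) as [dl [Hdl H]]; [lra|].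
  unfold Icc in Hx.
  destruct (Rlt_dec x hi) as [Hxh|Hxh].
  - set (y := x + Rmin (dl/2) (hi - x)).
    assert (Hm : 0 < Rmin (dl/2) (hi-x)) by (apply Rmin_pos; lra).
    assert (Hm2 : Rmin (dl/2) (hi-x) <= dl/2) by apply Rmin_l.
    assert (Hm3 : Rmin (dl/2) (hi-x) <= hi - x) by apply Rmin_r.
    assert (Hfy : f x < f y) by (apply Hinc; unfold Icc, y; lra).
    assert (Q : 0 < (f y - f x) / (y - x)).
    { apply Rdiv_lt_0_compat; unfold y in *; lra. }
    specialize (H y). assert (HH : Rabs ((f y - f x) / (y - x) - df x) < - df x).
    { apply H; unfold Icc, y; try lra. rewrite Rabs_pos_eq; lra. }
    revert HH. unfold Rabs; destruct Rcase_abs; lra.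
  - set (y := x - Rmin (dl/2) (hi - lo)).
    assert (Hm : 0 < Rmin (dl/2) (hi-lo)) by (apply Rmin_pos; lra).
    assert (Hm2 : Rmin (dl/2) (hi-lo) <= dl/2) by apply Rmin_l.
    assert (Hm3 : Rmin (dl/2) (hi-lo) <= hi - lo) by apply Rmin_r.
    assert (Hfy : f y < f x) by (apply Hinc; unfold Icc, y; lra).
    assert (Q : 0 < (f y - f x) / (y - x)).
    { replace ((f y - f x) / (y - x)) with ((f x - f y) / (x - y)) by (field; unfold y; lra).
      apply Rdiv_lt_0_compat; unfold y in *; lra. }
    specialize (H y). assert (HH : Rabs ((f y - f x) / (y - x) - df x) < - df x).
    { apply H; unfold Icc, y; try lra. rewrite Rabs_left; lra. }
    revert HH. unfold Rabs; destruct Rcase_abs; lra.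
Qed.

Fixpoint itr (t : R -> R) (n : nat) (x : R) : R :=
  match n with O => x | S m => itr t m (t x) end.
Fixpoint Pd (t d : R -> R) (n : nat) (x : R) : R :=
  match n with O => 1 | S m => d x * Pd t d m (t x) end.
Definition term (t d g : R -> R) (n : nat) (x : R) : R := g (itr t n x) * Pd t d n x.

Theorem proposition2
  (a : R) (tau1 tau2 tau21 dtau1 dtau2 dtau21 : R -> R) (ahat sigma : R)
  (ha : 0 < a < 1)
  (h1C1 : C1_on 0 a tau1 dtau1) (h2C1 : C1_on 0 a tau2 dtau2)
  (h1inc : strict_incr_on 0 a tau1) (h2inc : strict_incr_on 0 a tau2)
  (h1range : forall x, Icc 0 a x -> Icc 0 1 (tau1 x))
  (h2range : forall x, Icc 0 a x -> Icc 0 1 (tau2 x))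
  (h10 : tau1 0 = 0) (h20 : tau2 0 = 0) (h1a : tau1 a = 1) (h2a : tau2 a = 1)
  (h1le : forall x, Icc 0 a x -> tau1 x <= x / a)
  (h2ge : forall x, Icc 0 a x -> x / a <= tau2 x)
  (* tau21 = tau2^{-1} o tau1 on [0,a] *)
  (h21def : forall x, Icc 0 a x -> Icc 0 a (tau21 x) /\ tau2 (tau21 x) = tau1 x)
  (h21C1 : C1_on 0 a tau21 dtau21)
  (h21lt : forall x, 0 < x < a -> tau21 x < x)
  (hahat : 0 < ahat < a) (hsigma : sigma < 1)
  (hsig : forall x, Icc 0 ahat x -> dtau21 x <= sigma) :
  exists p : R -> R,
    bounded_on 0 ahat p /\
    (forall x, Icc 0 ahat x ->
       p x = p (tau21 x) * dtau21 x - (dtau21 x - a * dtau1 x)) /\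
    (forall q : R -> R, bounded_on 0 ahat q ->
       (forall x, Icc 0 ahat x ->
          q x = q (tau21 x) * dtau21 x - (dtau21 x - a * dtau1 x)) ->
       forall x, Icc 0 ahat x -> q x = p x).
Proof.
  set (t := tau21). set (d := dtau21).
  set (g := fun x => d x - a * dtau1 x).
  assert (tinc : forall x y, Icc 0 a x -> Icc 0 a y -> x < y -> t x < t y).
  { intros x y Hx Hy Hxy. destruct (h21def x Hx) as [Hx1 Hx2].
    destruct (h21def y Hy) as [Hy1 Hy2].
    assert (tau1 x < tau1 y) by (apply h1inc; auto).
    destruct (Rlt_or_le (t x) (t y)) as [h|h]; [exact h|].
    exfalso. destruct (Rle_lt_or_eq_dec _ _ h) as [h'|h'].
    - assert (tau2 (t y) < tau2 (t x)) by (apply h2inc; auto). unfold t in *; lra.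
    - unfold t in *. rewrite h' in Hy2. lra. }
  assert (t0 : t 0 = 0).
  { assert (H0 : Icc 0 a 0) by (unfold Icc; lra).
    destruct (h21def 0 H0) as [[Ha Hb] Hc].
    destruct (Rle_lt_or_eq_dec _ _ Ha) as [h|h]; [|unfold t; lra].
    exfalso. assert (tau2 0 < tau2 (tau21 0)) by (apply h2inc; unfold Icc; lra). lra. }
  assert (tmap : forall x, Icc 0 ahat x -> Icc 0 ahat (t x)).
  { intros x [Hx1 Hx2]. destruct (Rle_lt_or_eq_dec _ _ Hx1) as [h|h].
    - assert (t x < x) by (apply h21lt; lra).
      destruct (h21def x) as [[? ?] _]; [unfold Icc; lra|]. unfold Icc, t in *; lra.
    - subst x. rewrite t0. unfold Icc; lra. }
  assert (dnn : forall x, Icc 0 ahat x -> 0 <= d x).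
  { intros x [Hx1 Hx2]. apply (deriv_nonneg 0 a t d x); try lra.
    - unfold Icc; lra.
    - apply (proj1 h21C1). unfold Icc; lra.
    - exact tinc. }
  assert (sig0 : 0 <= sigma).
  { assert (Icc 0 ahat 0) by (unfold Icc; lra).
    specialize (dnn 0 H). specialize (hsig 0 H). unfold d in *; lra. }
  destruct (bounded_cont 0 a dtau1) as [M1 HM1]; [lra| exact (proj2 h1C1)|].
  set (G := 1 + a * M1).
  assert (gb : forall x, Icc 0 ahat x -> Rabs (g x) <= G).
  { intros x Hx. assert (Hx' : Icc 0 a x) by (unfold Icc in *; lra).
    specialize (HM1 x Hx'). specialize (dnn x Hx). specialize (hsig x Hx).
    unfold g, G. eapply Rle_trans; [apply Rabs_triang|].
    rewrite Rabs_Ropp, Rabs_mult, (Rabs_pos_eq a) by lra.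
    rewrite Rabs_pos_eq by lra. unfold d in *.
    assert (a * Rabs (dtau1 x) <= a * M1) by (apply Rmult_le_compat_l; lra). lra. }
  assert (itr_in : forall n x, Icc 0 ahat x -> Icc 0 ahat (itr t n x)).
  { induction n; intros x Hx; simpl; auto. }
  assert (Pdb : forall n x, Icc 0 ahat x -> 0 <= Pd t d n x <= sigma ^ n).
  { induction n; intros x Hx; simpl; [lra|].
    specialize (IHn (t x) (tmap x Hx)). specialize (dnn x Hx). specialize (hsig x Hx).
    unfold d in *. split; [nra|]. apply Rmult_le_compat; lra. }
  assert (G0 : 0 <= G).
  { assert (H : Icc 0 ahat 0) by (unfold Icc; lra). specialize (gb 0 H).
    pose proof (Rabs_pos (g 0)). lra. }
  assert (tb : forall n x, Icc 0 ahat x -> Rabs (term t d g n x) <= G * sigma ^ n).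
  { intros n x Hx. unfold term. rewrite Rabs_mult.
    specialize (Pdb n x Hx). rewrite (Rabs_pos_eq (Pd t d n x)) by lra.
    apply Rmult_le_compat; try lra; [apply Rabs_pos| apply gb; auto]. }
  assert (geo : is_series (fun n => G * sigma ^ n) (G * / (1 - sigma))).
  { apply (is_series_scal_l G (fun n => sigma ^ n)). apply is_series_geom.
    rewrite Rabs_pos_eq; lra. }
  assert (exgeo : ex_series (fun n => G * sigma ^ n)) by (eexists; exact geo).
  assert (ext : forall x, Icc 0 ahat x -> ex_series (fun n => term t d g n x)).
  { intros x Hx. apply (ex_series_le (fun n => term t d g n x) (fun n => G * sigma ^ n)); [intros n; apply tb; auto| exact exgeo]. }
  set (p := fun x => - Series (fun n => term t d g n x)).
  exists p. split; [|split].
  - exists (G * / (1 - sigma)). intros x Hx. unfold p. rewrite Rabs_Ropp.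
    eapply Rle_trans; [apply Series_Rabs|].
    + apply (ex_series_le (fun n => Rabs (term t d g n x)) (fun n => G * sigma ^ n)); [|exact exgeo]. intros n. rewrite Rabs_Rabsolu. apply tb; auto.
    + rewrite <- (is_series_unique _ _ geo). apply Series_le; [|exact exgeo].
      intros n; split; [apply Rabs_pos| apply tb; auto].
  - intros x Hx. unfold p. rewrite Series_incr_1 by (apply ext; auto).
    rewrite (Series_ext _ (fun n => d x * term t d g n (t x))).
    + rewrite Series_scal_l. unfold term at 1; simpl. fold d t. unfold g. ring.
    + intros n. unfold term. simpl. ring.
  - intros q [Mq HMq] Hq x Hx.
    assert (Hp : forall x, Icc 0 ahat x -> p x = p (t x) * d x - g x).
    { intros y Hy. unfold p. rewrite Series_incr_1 by (apply ext; auto).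
      rewrite (Series_ext _ (fun n => d y * term t d g n (t y))).
      + rewrite Series_scal_l. unfold term at 1; simpl. ring.
      + intros n. unfold term. simpl. ring. }
    set (Mp := G * / (1 - sigma)).
    assert (HMp : forall y, Icc 0 ahat y -> Rabs (p y) <= Mp).
    { intros y Hy. unfold p. rewrite Rabs_Ropp.
      eapply Rle_trans; [apply Series_Rabs|].
      + apply (ex_series_le (fun n => Rabs (term t d g n y)) (fun n => G * sigma ^ n)); [|exact exgeo]. intros n. rewrite Rabs_Rabsolu. apply tb; auto.
      + unfold Mp. rewrite <- (is_series_unique _ _ geo). apply Series_le; [|exact exgeo].
        intros n; split; [apply Rabs_pos| apply tb; auto]. }
    set (r := fun y => q y - p y).
    set (M := Mq + Mp).
    assert (Hr : forall n y, Icc 0 ahat y -> Rabs (r y) <= M * sigma ^ n).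
    { induction n; intros y Hy.
      - simpl. unfold r, M. rewrite Rmult_1_r.
        eapply Rle_trans; [apply Rabs_triang|]. rewrite Rabs_Ropp.
        specialize (HMq y Hy). specialize (HMp y Hy). lra.
      - assert (E : r y = r (t y) * d y).
        { unfold r. rewrite (Hq y Hy), (Hp y Hy). fold t d. unfold g. ring. }
        rewrite E, Rabs_mult. specialize (IHn (t y) (tmap y Hy)).
        specialize (dnn y Hy). specialize (hsig y Hy).
        rewrite (Rabs_pos_eq (d y)) by lra. simpl.
        replace (M * (sigma * sigma ^ n)) with ((M * sigma ^ n) * sigma) by ring.
        apply Rmult_le_compat; unfold d in *; try lra. apply Rabs_pos. }
    assert (M0 : 0 <= M).
    { specialize (Hr O x Hx). simpl in Hr. pose proof (Rabs_pos (r x)). lra. }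
    assert (Z : r x = 0).
    { destruct (Req_dec (r x) 0) as [h|h]; [exact h|]. exfalso.
      assert (Hpos : 0 < Rabs (r x)) by (apply Rabs_pos_lt; exact h).
      destruct (pow_lt_1_zero sigma) with (y := Rabs (r x) / (M + 1)) as [N HN].
      + rewrite Rabs_pos_eq; lra.
      + apply Rdiv_lt_0_compat; lra.
      + specialize (HN N (le_n N)). specialize (Hr N x Hx).
        rewrite Rabs_pos_eq in HN by (apply pow_le; lra).
        assert (HN' : sigma ^ N * (M + 1) < Rabs (r x)).
        { apply (Rmult_lt_compat_r (M+1)) in HN; [|lra].
          unfold Rdiv in HN. rewrite Rmult_assoc, Rinv_l, Rmult_1_r in HN by lra. exact HN. }
        pose proof (pow_le sigma N sig0). nra. }
    unfold r in Z. lra.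
Qed.
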